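(* Let $N\ge1$, $\varepsilon\in(0,1)$, $U\in C^\infty(\mathbb{R}^d)$ and $G\in C^\infty(\mathbb{R}^d\setminus\{0\})$. On $\mathbf{X}=\mathcal{D}\times(\mathbb{R}^d)^N$ consider the vector fields $X_0=\sum_{i=1}^N\frac{p_i}{\sqrt{1+\varepsilon|p_i|^2}}\partial_{q_i}+\sum_{i=1}^N\Big(-\frac{p_i}{\sqrt{1+\varepsilon|p_i|^2}}-\nabla U(q_i)-\sum_{j\ne i}\nabla G(q_i-q_j)\Big)\partial_{p_i}$ and $X_i=\partial_{p_i}$, $i=1,\dots,N$. Then the Lie algebra generated by the family $\{X_i\}_{i=1}^N$, $\{[X_i,X_j]\}_{i,j=0}^N$, $\{[[X_i,X_j],X_k]\}_{i,j,k=0}^N,\dots$ spans the tangent space $\mathbb{R}^{2dN}$ at every point of $\mathbf{X}$ (Hörmander's condition).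
   Context: $\mathcal{D}=\{\mathbf{q}=(q_1,\dots,q_N)\in(\mathbb{R}^d)^N: q_i\ne q_j\text{ for } i\ne j\}$. These vector fields are those for which the generator of the relativistic Langevin system $dq_i=\frac{p_i}{\sqrt{1+\varepsilon|p_i|^2}}dt$, $dp_i=-\frac{p_i}{\sqrt{1+\varepsilon|p_i|^2}}dt-\nabla U(q_i)dt-\sum_{j\ne i}\nabla G(q_i-q_j)dt+\sqrt2\,dW_i$ is $X_0+\sum_{i=1}^N X_i^2$ (with $X_i^2=\Delta_{p_i}$). *)

(* Defs.v *)
From HB Require Import structures.
From mathcomp Require Import all_boot all_order all_algebra.
From mathcomp Require Import all_classical all_reals all_analysis.
Set Implicit Arguments. Unset Strict Implicit. Unset Printing Implicit Defensive.
Import Order.TTheory GRing.Theory Num.Theory.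
Import numFieldNormedType.Exports.
Local Open Scope classical_set_scope.
Local Open Scope ring_scope.

Section Defs.
Variable R : realType.

Fixpoint iterD (V W : normedModType R) (vs : seq V) (f : V -> W) : V -> W :=
  match vs with
  | [::] => f
  | v :: vs' => fun x => 'D_v (iterD vs' f) x
  end.

Definition smooth_on (V W : normedModType R) (A : set V) (f : V -> W) :=
  forall (vs : seq V) (x : V), A x -> differentiable (iterD vs f) x.

Definition sqnorm (d : nat) (x : 'rV[R]_d) : R := \sum_(k < d) x ord0 k ^+ 2.

Definition grad (d : nat) (f : 'rV[R]_d -> R) (x : 'rV[R]_d) : 'rV[R]_d :=
  \row_(k < d) ('D_(delta_mx 0 k : 'rV[R]_d) f x).

(* State (and tangent) space: pairs (q, p) of N x d matrices; row i is q_i / p_i. *)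
Definition state (N d : nat) := ('M[R]_(N, d) * 'M[R]_(N, d))%type.

Definition config_dom (N d : nat) : set (state N d) :=
  [set z | forall i j : 'I_N, i != j -> row i z.1 != row j z.1].

Definition lie_bracket (V : normedModType R) (X Y : V -> V) : V -> V :=
  fun z => 'D_(X z) Y z - 'D_(Y z) X z.

Definition relvel (d : nat) (eps : R) (p : 'rV[R]_d) : 'rV[R]_d :=
  (Num.sqrt (1 + eps * sqnorm p))^-1 *: p.

Definition drift (N d : nat) (eps : R) (U G : 'rV[R]_d -> R)
  (z : state N d) : state N d :=
  (\matrix_(i < N) relvel eps (row i z.2),
   \matrix_(i < N) (- relvel eps (row i z.2) - grad U (row i z.1)
                    - \sum_(j < N | j != i) grad G (row i z.1 - row j z.1))).

(* The constant coordinate field d/dp_i^k (the components of X_i = d/dp_i). *)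
Definition dp (N d : nat) (i : 'I_N) (k : 'I_d) (z : state N d) : state N d :=
  (0, delta_mx i k).

Definition gen (N d : nat) (eps : R) (U G : 'rV[R]_d -> R)
  (a : option ('I_N * 'I_d)) : state N d -> state N d :=
  match a with
  | None => drift eps U G
  | Some (i, k) => dp i k
  end.

Inductive iter_br (N d : nat) (eps : R) (U G : 'rV[R]_d -> R) :
    (state N d -> state N d) -> Prop :=
  | ib2 a b : iter_br eps U G (lie_bracket (gen eps U G a) (gen eps U G b))
  | ibS Y c : iter_br eps U G Y ->
      iter_br eps U G (lie_bracket Y (gen eps U G c)).

Definition hormander_family (N d : nat) (eps : R) (U G : 'rV[R]_d -> R)
    (Y : state N d -> state N d) : Prop :=
  (exists i k, Y = dp i k) \/ iter_br eps U G Y.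

Inductive lie_gen (V : normedModType R) (F : (V -> V) -> Prop) :
    (V -> V) -> Prop :=
  | lg_in Y : F Y -> lie_gen F Y
  | lg_add Y Z : lie_gen F Y -> lie_gen F Z -> lie_gen F (fun z => Y z + Z z)
  | lg_scale (c : R) Y : lie_gen F Y -> lie_gen F (fun z => c *: Y z)
  | lg_br Y Z : lie_gen F Y -> lie_gen F Z -> lie_gen F (lie_bracket Y Z).

End Defs.

(* Main.v *)
Require Import Defs.
From HB Require Import structures.
From mathcomp Require Import all_boot all_order all_algebra.
From mathcomp Require Import all_classical all_reals all_analysis.
From mathcomp Require Import ring lra.
Import Order.TTheory GRing.Theory Num.Theory.
Import numFieldNormedType.Exports.
Local Open Scope classical_set_scope.
Local Open Scope ring_scope.

Section T.
Variable R : realType.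
Lemma dlin (b c x : R) : is_derive x 1 (fun h : R => h * b + c) b.
Proof.
have := @is_deriveD R R R (fun h => h * b) (cst c) x 1 b 0.
rewrite addr0; apply.
have := @is_deriveM R R (fun h => h) (cst b) x 1 1 0.
rewrite scaler0 add0r /= scaler1. apply.
Qed.

Lemma dpsi (eps wk S : R) : is_derive (0:R) 1
  (fun h : R => 1 + eps * (h ^+ 2 + 2 * h * wk + S)) (eps * (2 * wk)).
Proof.
have := @is_deriveD R R R (cst 1) (fun h => eps * (h ^+ 2 + 2 * h * wk + S)) 0 1 0 (eps * (2 * wk)).
rewrite add0r; apply.
have := @is_deriveM R R (cst eps) (fun h => (h ^+ 2 + 2 * h * wk + S)) 0 1 0 (2 * wk).
rewrite scaler0 addr0 /=; apply.
have := @is_deriveD R R R (fun h => h ^+ 2 + 2 * h * wk) (cst S) 0 1 (2 * wk) 0.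
rewrite addr0; apply.
have := @is_deriveD R R R (fun h => h ^+ 2) (fun h => 2 * h * wk) 0 1 0 (2 * wk).
rewrite add0r; apply.
  have := @is_deriveX R R (fun h => h) 2 0 1 1.
  by rewrite /= expr1 mulr0 scale0r; apply.
have -> : (fun h : R => 2 * h * wk) = (fun h => h * (2 * wk) + 0).
  by apply/funext => h; rewrite addr0 mulrCA mulrA.
exact: dlin.
Qed.

Lemma drho (eps wk S c wl : R) : 0 < 1 + eps * S ->
  is_derive (0:R) 1
   (fun h : R => (h * c + wl) * (Num.sqrt (1 + eps * (h ^+ 2 + 2 * h * wk + S)))^-1)
   (c / Num.sqrt (1 + eps * S) - wl * eps * wk / (Num.sqrt (1 + eps * S)) ^+ 3).
Proof.
move=> pos.
set s := Num.sqrt (1 + eps * S).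
have s0 : 0 < s by rewrite sqrtr_gt0.
have psi0 : (fun h : R => 1 + eps * (h ^+ 2 + 2 * h * wk + S)) 0 = 1 + eps * S.
  by rewrite /= expr0n /= mulr0 mul0r !add0r.
have dsq := @is_derive1_sqrt R _ pos.
rewrite -psi0 in dsq.
have dc := @is_derive1_comp R Num.sqrt (fun h : R => 1 + eps * (h ^+ 2 + 2 * h * wk + S)) 0 _ _ dsq (dpsi eps wk S).
have nz : (Num.sqrt \o (fun h : R => 1 + eps * (h ^+ 2 + 2 * h * wk + S))) 0 != 0.
  by rewrite /= psi0 gt_eqF.
have dv := is_deriveV nz dc.
have H := is_deriveM (dlin c wl 0) dv.
eapply is_derive_eq; first exact: H.
rewrite /= psi0 -/s mul0r add0r.
rewrite /GRing.scale /=. field. by rewrite gt_eqF.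
Qed.


Section Main.
Variables (N d : nat) (eps : R) (U G : 'rV[R]_d -> R).
Variables (z : state R N d) (i : 'I_N) (k : 'I_d).

Definition Sq := \sum_(m < d) z.2 i m ^+ 2.
Definition rho (l : 'I_d) (h : R) := (h * (l == k)%:R + z.2 i l) *
  (Num.sqrt (1 + eps * (h ^+ 2 + 2 * h * z.2 i k + Sq)))^-1.
Definition E (l : 'I_d) : state R N d := (delta_mx i l, - delta_mx i l).

Lemma sum_one (f : 'I_d -> R) : (forall m, m != k -> f m = 0) -> \sum_m f m = f k.
Proof. by move=> H; rewrite (bigD1 k) //= big1 ?addr0. Qed.

Lemma relvel_row (h : R) (a : 'I_N) (b : 'I_d) :
  relvel eps (row a (h *: delta_mx i k + z.2)) 0 b =
  if a == i then rho b h else relvel eps (row a z.2) 0 b.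
Proof.
case: eqP => [->|ne].
  rewrite /relvel /rho /sqnorm !mxE eqxx /= mulrC; congr (_ * _).
  congr ((Num.sqrt (1 + eps * _))^-1).
  apply/eqP; rewrite -subr_eq /Sq -sumrB.
  rewrite sum_one; last first.
    by move=> m /negbTE mk; rewrite !mxE eqxx mk mulr0 add0r subrr.
  rewrite !mxE !eqxx /= mulr1; apply/eqP.
  rewrite sqrrD. ring.
congr (relvel eps _ 0 b); apply/matrixP => x y; rewrite !mxE.
by move/eqP/negbTE: ne => ->; rewrite mulr0 add0r.
Qed.

Lemma rho0 b : rho b 0 = relvel eps (row i z.2) 0 b.
Proof.
rewrite /rho /relvel /sqnorm !mxE mul0r add0r expr0n /= !mulr0 mul0r !add0r mulrC.
by congr (_ * _); rewrite /Sq; congr ((Num.sqrt (1 + eps * _))^-1); apply: eq_bigr => m _; rewrite mxE.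
Qed.

Lemma fst_sum (I : finType) (p : I -> state R N d) : (\sum_l p l).1 = \sum_l (p l).1.
Proof. exact: (big_morph fst (fun x y => erefl) erefl). Qed.
Lemma snd_sum (I : finType) (p : I -> state R N d) : (\sum_l p l).2 = \sum_l (p l).2.
Proof. exact: (big_morph snd (fun x y => erefl) erefl). Qed.

Lemma pair_ext (p q : state R N d) : p.1 = q.1 -> p.2 = q.2 -> p = q.
Proof. by case: p q => ? ? [] ? ? /= -> ->. Qed.
Lemma fst_sub (p q : state R N d) : (p - q).1 = p.1 - q.1.
Proof. by []. Qed.
Lemma snd_sub (p q : state R N d) : (p - q).2 = p.2 - q.2.
Proof. by []. Qed.

Lemma diff_eq h : drift eps U G (h *: ((0 : 'M[R]_(N, d)), delta_mx i k) + z) - drift eps U G z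
  = \sum_l (rho l h - rho l 0) *: E l.
Proof.
have key : forall a b, relvel eps (row a (h *: delta_mx i k + z.2)) 0 b -
    relvel eps (row a z.2) 0 b = \sum_l (rho l h - rho l 0) * delta_mx i l a b.
  move=> a b; rewrite relvel_row; case: eqP => [->|ne].
    rewrite -rho0 (bigD1 b) //= big1 ?addr0; last first.
      by move=> l /negbTE lb; rewrite mxE eqxx eq_sym lb mulr0.
    by rewrite mxE !eqxx mulr1.
  by rewrite subrr big1 // => l _; rewrite mxE; move/eqP/negbTE: ne => ->; rewrite mulr0.
have -> : h *: ((0 : 'M[R]_(N, d)), delta_mx i k) + z = (z.1, h *: delta_mx i k + z.2).
  rewrite [z in LHS]surjective_pairing.
  apply: (@eq_trans _ _ (h *: (0 : 'M[R]_(N, d)) + z.1, h *: delta_mx i k + z.2)); first by [].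
  by rewrite scaler0 add0r.
apply: pair_ext.
  rewrite fst_sum fst_sub /=; apply/matrixP => a b; rewrite [@relvel]lock in key *.
  rewrite !mxE summxE key.
  by apply: eq_bigr => l _; rewrite [RHS]mxE.
rewrite snd_sum snd_sub /=; apply/matrixP => a b.
rewrite [@relvel]lock in key *.
rewrite summxE !mxE.
rewrite (_ : forall x y c e : R, (- x - c - e) - (- y - c - e) = - (x - y)); last by move=> *; ring.
rewrite key -sumrN; apply: eq_bigr => l _; rewrite [RHS]mxE [in RHS]mxE; ring.
Qed.

Lemma scal_cvg (f : R -> R) (df : R) : is_derive (0:R) (1:R) f df ->
  (fun h => h^-1 * (f h - f 0)) @ 0^' --> df.
Proof.
case=> Hd <-.
suff -> : (fun h => h^-1 * (f h - f 0)) = (fun h => h^-1 *: ((f \o shift 0) (h *: 1) - f 0)) by exact: Hd.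
by apply/funext => h /=; rewrite addr0 /GRing.scale /= mulr1.
Qed.

Hypothesis eps0 : 0 < eps.
Definition sv := Num.sqrt (1 + eps * Sq).
Definition gval (l : 'I_d) := (l == k)%:R / sv - z.2 i l * eps * z.2 i k / sv ^+ 3.

Lemma pos1 : 0 < 1 + eps * Sq.
Proof. rewrite ltr_pwDl //; apply: mulr_ge0; [exact: ltW | rewrite /Sq; apply: sumr_ge0 => m _; exact: sqr_ge0]. Qed.

Lemma Dd : 'D_(((0 : 'M[R]_(N, d)), delta_mx i k) : state R N d) (drift eps U G) z = \sum_l gval l *: E l.
Proof.
apply: cvg_lim; first exact: norm_hausdorff.
rewrite (_ : (fun h => _) = (fun h => \sum_l (h^-1 * (rho l h - rho l 0)) *: E l)); last first.
  apply/funext => h /=; rewrite diff_eq scaler_sumr; apply: eq_bigr => l _; by rewrite scalerA.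
apply: (@cvg_big _ _ +%R 0 xpredT add_continuous) => // l _.
apply: cvgZr_tmp.
apply: scal_cvg.
exact: (drho _ _ _ _ _ pos1).
Qed.

Lemma bracket_val : lie_bracket (dp i k) (drift eps U G) z = \sum_l gval l *: E l.
Proof.
rewrite /lie_bracket /dp Dd.
by rewrite (derive_cst (((0 : 'M[R]_(N, d)), delta_mx i k) : state R N d)) subr0.
Qed.
End Main.

Section Alg.
Variables (N d : nat) (eps : R) (z : state R N d) (i : 'I_N).
Hypothesis eps0 : 0 < eps.

Lemma sum_delta (k : 'I_d) (f : 'I_d -> R) : \sum_j (j == k)%:R * f j = f k.
Proof.
rewrite (bigD1 k) //= eqxx mul1r big1 ?addr0 // => j /negbTE ->; by rewrite mul0r.
Qed.

Lemma alpha_id (k l : 'I_d) :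
  \sum_j (sv N d eps z i * ((j == k)%:R + eps * z.2 i k * z.2 i j)) * gval N d eps z i j l
  = (l == k)%:R.
Proof.
set t := sv N d eps z i.
have t0 : 0 < t by rewrite sqrtr_gt0 (@pos1 N d eps z i eps0).
have ht : t ^+ 2 = 1 + eps * Sq N d z i by rewrite sqr_sqrtr // ltW // (@pos1 N d eps z i eps0).
have hS : Sq N d z i = (t ^+ 2 - 1) / eps by rewrite ht addrC addKr mulrC mulKf // gt_eqF.
rewrite (eq_bigr (fun j => (j == k)%:R * (t * gval N d eps z i j l) +
   ((l == j)%:R * (z.2 i j * (t * eps * z.2 i k / t)) -
    z.2 i j ^+ 2 * (t * eps * z.2 i k * z.2 i l * eps / t ^+ 3)))); last first.
  by move=> j _; rewrite /gval -/t; ring.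
rewrite big_split /= sum_delta sumrB.
rewrite (eq_bigr (fun j => (j == l)%:R * (z.2 i j * (t * eps * z.2 i k / t)))); last first.
  by move=> j _; rewrite eq_sym.
rewrite sum_delta -mulr_suml -/(Sq N d z i) hS /gval -/t.
field.
by rewrite !gt_eqF.
Qed.
End Alg.
End T.


Section Pairs.
Variables (R : realType) (N d : nat).
Lemma fst_add (p q : state R N d) : (p + q).1 = p.1 + q.1. Proof. by []. Qed.
Lemma snd_add (p q : state R N d) : (p + q).2 = p.2 + q.2. Proof. by []. Qed.
Lemma fst_scale (c : R) (p : state R N d) : (c *: p).1 = c *: p.1. Proof. by []. Qed.
Lemma snd_scale (c : R) (p : state R N d) : (c *: p).2 = c *: p.2. Proof. by []. Qed.
Lemma fst2 (p : 'I_N -> 'I_d -> state R N d) :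
  (\sum_a \sum_b p a b).1 = \sum_a \sum_b (p a b).1.
Proof. by rewrite fst_sum; apply: eq_bigr => a _; rewrite fst_sum. Qed.
Lemma snd2 (p : 'I_N -> 'I_d -> state R N d) :
  (\sum_a \sum_b p a b).2 = \sum_a \sum_b (p a b).2.
Proof. by rewrite snd_sum; apply: eq_bigr => a _; rewrite snd_sum. Qed.
End Pairs.

Theorem lemma3p6 (R : realType) (N d : nat) (eps : R)
    (U G : 'rV[R]_d -> R) :
  (1 <= N)%N -> 0 < eps < 1 ->
  smooth_on [set: 'rV[R]_d] U ->
  smooth_on [set x : 'rV[R]_d | x != 0] G ->
  forall z : state R N d, config_dom z ->
  forall v : state R N d,
    exists (m : nat) (c : 'I_m -> R) (Y : 'I_m -> state R N d -> state R N d),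
      (forall l, lie_gen (hormander_family eps U G) (Y l)) /\
      v = \sum_(l < m) c l *: Y l z.
Proof.
move=> N1 /andP[eps0 _] _ _ z _ v.
pose F := @hormander_family R N d eps U G.
pose S := fun u : state R N d => exists Y, lie_gen F Y /\ Y z = u.
suff [Y [HY HYz]] : S v.
  by exists 1%N, (fun _ => 1), (fun _ => Y); split => //; rewrite big_ord1 scale1r.
have S0 : S 0.
  exists (fun x => 0 *: lie_bracket (gen eps U G None) (gen eps U G None) x); split.
    by apply: lg_scale; apply: lg_in; right; exact: ib2.
  by rewrite scale0r.
have SD : forall a b, S a -> S b -> S (a + b).
  by move=> a b [Ya [Ha <-]] [Yb [Hb <-]]; exists (fun x => Ya x + Yb x); split => //; apply: lg_add.
have SZ : forall (c : R) a, S a -> S (c *: a).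
  by move=> c a [Ya [Ha <-]]; exists (fun x => c *: Ya x); split => //; apply: lg_scale.
have Sp : forall i k, S (0, delta_mx i k).
  by move=> i k; exists (dp i k); split => //; apply: lg_in; left; exists i, k.
have Sb : forall i k, S (\sum_l gval R N d eps z i k l *: E R N d i l).
  move=> i k; exists (lie_bracket (gen eps U G (Some (i, k))) (gen eps U G None)); split.
    by apply: lg_in; right; exact: ib2.
  exact: bracket_val.
have Sq' : forall i k, S (delta_mx i k, 0).
  move=> i k.
  have -> : ((delta_mx i k, 0) : state R N d) = \sum_j (sv R N d eps z i * ((j == k)%:R + eps * z.2 i k * z.2 i j)) *:
     (\sum_l gval R N d eps z i j l *: E R N d i l) + (0, delta_mx i k).
    under eq_bigr do rewrite scaler_sumr.
    rewrite exchange_big /=.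
    under eq_bigr do under eq_bigr do rewrite scalerA.
    under eq_bigr do rewrite -scaler_suml alpha_id //.
    rewrite (bigD1 k) //= big1 ?addr0; last by move=> l /negbTE ->; rewrite scale0r.
    rewrite eqxx scale1r.
    by apply: pair_ext; rewrite /= ?addr0 ?addNr.
  apply SD; last exact: Sp.
  by apply: (big_ind S S0 SD) => j _; apply SZ; exact: Sb.
have -> : v = \sum_a \sum_b (v.1 a b *: ((delta_mx a b, 0) : state R N d)) +
              \sum_a \sum_b (v.2 a b *: ((0, delta_mx a b) : state R N d)).
  apply: pair_ext.
    rewrite fst_add !fst2 [X in _ + X]big1 ?addr0; last first.
      by move=> a _; rewrite big1 // => b _; rewrite fst_scale scaler0.
    rewrite [LHS]matrix_sum_delta; apply: eq_bigr => a _; apply: eq_bigr => b _.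
    by rewrite fst_scale.
  rewrite snd_add !snd2 [X in X + _]big1 ?add0r; last first.
    by move=> a _; rewrite big1 // => b _; rewrite snd_scale scaler0.
  rewrite [LHS]matrix_sum_delta; apply: eq_bigr => a _; apply: eq_bigr => b _.
  by rewrite snd_scale.
apply SD; (apply: (big_ind S S0 SD) => a _; apply: (big_ind S S0 SD) => b _; apply SZ).
  exact: Sq'.
exact: Sp.
Qed.
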